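(* Let $P$ be a probability distribution on $\mathcal{X}\times\{+1,-1\}$ such that for some $\varepsilon>0$, $P(\{x\in\mathcal{X}:\varepsilon\le P(+1|x)\le 1-\varepsilon\})>0$. Let $\ell:\mathbb{R}\to\mathbb{R}$ be non-decreasing, convex and non-negative, and suppose that for every $M>0$ there is $z_0$ such that $g\ge M$ for all $z\ge z_0$ and all $g\in\partial\ell(z)$. Define, for measurable $f:\mathcal{X}\to\mathbb{R}$ and $\rho\in\mathbb{R}$, $\mathcal{R}(f,\rho)=-2\rho+\mathbb{E}_P[\ell(\rho-yf(x))]$ and $\mathcal{R}^*=\inf\{\mathcal{R}(f,\rho): f\in L_0(\mathcal{X}),\rho\in\mathbb{R}\}$. Then $\mathcal{R}^*>-\infty$.
   Context: $P(y|x)$ denotes the conditional probability of label $y$ given input $x$; $L_0(\mathcal{X})$ is the set of measurable functions on $\mathcal{X}$; $\partial\ell(z)$ is the subdifferential of $\ell$ at $z$. *)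

(* Defs.v *)
From HB Require Import structures.
From mathcomp Require Import all_boot all_order all_algebra.
From mathcomp Require Import all_classical all_reals all_analysis.
Set Implicit Arguments. Unset Strict Implicit. Unset Printing Implicit Defensive.
Import Order.TTheory GRing.Theory Num.Theory.
Local Open Scope classical_set_scope.
Local Open Scope ring_scope.

Definition lab {R : realType} (b : bool) : R := if b then 1 else -1.

(* eta is a version of the conditional probability P(+1|x):
   for every measurable A, P(A x {+1}) = int_{A x {+1,-1}} eta(x) dP *)
Definition cond_prob_pos {d} {X : measurableType d} {R : realType}
  (P : probability (X * bool)%type R) (eta : X -> R) : Prop :=
  measurable_fun setT eta /\
  forall A : set X, measurable A ->
    P (A `*` [set true]) = (\int[P]_(z in A `*` setT) (eta z.1)%:E)%E.

Definition subdiff {R : realType} (l : R -> R) (z : R) : set R :=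
  [set g | forall w, l z + g * (w - z) <= l w].

Definition convex_fun {R : realType} (l : R -> R) : Prop :=
  forall x y t : R, 0 <= t <= 1 ->
    l (t * x + (1 - t) * y) <= t * l x + (1 - t) * l y.

Definition risk {d} {X : measurableType d} {R : realType}
  (P : probability (X * bool)%type R) (l : R -> R) (f : X -> R) (rho : R)
  : \bar R :=
  ((- (2 * rho))%:E + \int[P]_z (l (rho - lab z.2 * f z.1))%:E)%E.

Definition opt_risk {d} {X : measurableType d} {R : realType}
  (P : probability (X * bool)%type R) (l : R -> R) : \bar R :=
  ereal_inf [set r | exists (f : X -> R) (rho : R),
                      measurable_fun setT f /\ r = risk P l f rho].

(* Main.v *)
Require Import Defs.
From HB Require Import structures.
From mathcomp Require Import all_boot all_order all_algebra.
From mathcomp Require Import all_classical all_reals all_analysis.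
From mathcomp Require Import measurable_realfun lebesgue_measure.
From mathcomp Require Import ring lra.
Import Order.TTheory GRing.Theory Num.Theory.
Local Open Scope classical_set_scope.
Local Open Scope ring_scope.

Lemma slope_key {R : realType} (l : R -> R) : convex_fun l ->
  forall w z u : R, w < z -> z < u ->
  l z * (u - w) <= (u - z) * l w + (z - w) * l u.
Proof.
move=> Hc w z u wz zu.
have uw : 0 < u - w by lra.
pose t := (u - z) / (u - w).
have t01 : 0 <= t <= 1.
  apply/andP; split; first by apply: divr_ge0; lra.
  by rewrite /t ler_pdivrMr //; lra.
have := Hc w u t t01.
have -> : t * w + (1 - t) * u = z.
  by rewrite /t; field; rewrite gt_eqF //.
move=> H.
have H2 := ler_pM2r uw.
have : l z * (u - w) <= (t * l w + (1 - t) * l u) * (u - w) by rewrite H2.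
have -> : (t * l w + (1 - t) * l u) * (u - w) = (u - z) * l w + (z - w) * l u.
  by rewrite /t; field; rewrite gt_eqF //.
by [].
Qed.

Lemma slope_le {R : realType} (l : R -> R) : convex_fun l ->
  forall w z u : R, w < z -> z < u ->
  (l z - l w) / (z - w) <= (l u - l z) / (u - z).
Proof.
move=> Hc w z u wz zu; have K := @slope_key _ l Hc w z u wz zu.
have zw : 0 < z - w by lra.
have uz : 0 < u - z by lra.
rewrite ler_pdivrMr // mulrAC ler_pdivlMr //.
nra.
Qed.

Lemma subgrad_ex {R : realType} (l : R -> R) : convex_fun l ->
  forall z : R, exists g, subdiff l z g.
Proof.
move=> Hc z.
pose S := [set s | exists w, w < z /\ s = (l z - l w) / (z - w)].
have hS : has_sup S.
  split; first by exists ((l z - l (z - 1)) / (z - (z - 1))); exists (z - 1); split => //; lra.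
  exists ((l (z + 1) - l z) / (z + 1 - z)) => s [w [wz ->]].
  apply: slope_le => //; lra.
exists (sup S) => w.
have [wz|zw|->] := ltgtP w z.
- have := sup_upper_bound hS; move=> /(_ ((l z - l w) / (z - w))).
  have Sw : S ((l z - l w) / (z - w)) by exists w.
  move=> /(_ Sw); rewrite ler_pdivrMr; last lra.
  move=> H; nra.
- have : sup S <= (l w - l z) / (w - z).
    apply: ge_sup; first by case: hS.
    move=> s [v [vz ->]]; exact: slope_le.
  rewrite ler_pdivlMr; last lra.
  move=> H; nra.
- by rewrite subrr mulr0 addr0.
Qed.
Section K.
Variables (d : measure_display) (X : measurableType d) (R : realType)
  (P : probability (X * bool)%type R) (eta : X -> R).
Hypothesis Heta : cond_prob_pos P eta.

Lemma PfinE (S : set (X * bool)) : measurable S -> P S = (fine (P S))%:E.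
Proof. by move=> mS; rewrite fineK // fin_num_measure. Qed.

Lemma meta : measurable_fun [set: X * bool] (EFin \o (eta \o fst)).
Proof.
apply: measurableT_comp => //; apply: measurableT_comp => //.
exact: Heta.1.
Qed.

Lemma lower_true (eps : R) (B : set X) : measurable B ->
  (forall x, B x -> eps <= eta x) -> 0 <= eps ->
  eps * fine (P (B `*` setT)) <= fine (P (B `*` [set true])).
Proof.
move=> mB Hb e0.
have mBT : measurable (B `*` [set: bool]) by apply: measurableX.
rewrite -lee_fin EFinM -PfinE // -PfinE; last by apply: measurableX.
rewrite (Heta.2 B mB) -(@integral_cst _ _ _ P _ mBT).
apply: ge0_le_integral => //.
- exact: (measurable_funS measurableT (@subsetT _ _) meta).
- by move=> [x b] [/= Bx _]; rewrite lee_fin; apply: Hb.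
Qed.

Lemma upper_true (eps : R) (B : set X) : measurable B ->
  (forall x, B x -> eps <= eta x <= 1 - eps) -> 0 <= eps ->
  fine (P (B `*` [set true])) <= (1 - eps) * fine (P (B `*` setT)).
Proof.
move=> mB Hb e0.
have mBT : measurable (B `*` [set: bool]) by apply: measurableX.
have mBt : measurable (B `*` [set true]) by apply: measurableX.
rewrite -lee_fin EFinM -(PfinE _ mBT) -(PfinE _ mBt).
rewrite (Heta.2 B mB) -(@integral_cst _ _ _ P _ mBT).
apply: ge0_le_integral => //.
- move=> [x b] [/= Bx _]; rewrite lee_fin; have /andP[h1 _] := Hb x Bx; lra.
- exact: (measurable_funS measurableT (@subsetT _ _) meta).
- by move=> [x b] [/= Bx _]; rewrite lee_fin; have /andP[_ h2] := Hb x Bx.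
Qed.

Lemma splitT (B : set X) : measurable B ->
  fine (P (B `*` setT)) = fine (P (B `*` [set true])) + fine (P (B `*` [set false])).
Proof.
move=> mB.
have -> : B `*` setT = B `*` [set true] `|` B `*` [set false].
  apply/seteqP; split => [[x b] /= [Bx _]|[x b] /= [[Bx _]|[Bx _]]] //.
  by case: b; [left|right].
rewrite measureU; first by rewrite fineD // fin_num_measure //; apply: measurableX.
- by apply: measurableX.
- by apply: measurableX.
- by apply/seteqP; split => [[x b] /= [[_ ->] [_]]|].
Qed.


Lemma key (eps : R) (l : R -> R) (f : X -> R) (rho : R)
  (Hmono : {homo l : x y / x <= y}) (Hnneg : forall z, 0 <= l z)
  (mf : measurable_fun setT f) (e0 : 0 <= eps) :
  let A := [set x | (eps <= eta x <= 1 - eps)%R] in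
  measurable A ->
  ((eps * fine (P (A `*` setT)) * l rho)%:E <=
    \int[P]_z (l (rho - lab z.2 * f z.1))%:E)%E.
Proof.
move=> A mA.
have mfle : measurable [set x | f x <= 0].
  have -> : [set x | f x <= 0] = f @^-1` `]-oo, 0]%classic.
    by apply/seteqP; split => x /=; rewrite in_itv.
  by rewrite -[X in measurable X]setTI; apply: mf => //; exact: measurable_itv.
have mfgt : measurable [set x | 0 < f x].
  have -> : [set x | 0 < f x] = f @^-1` `]0, +oo[%classic.
    by apply/seteqP; split => x /=; rewrite in_itv /= andbT.
  by rewrite -[X in measurable X]setTI; apply: mf => //; exact: measurable_itv.
pose B1 := A `&` [set x | f x <= 0].
pose B2 := A `&` [set x | 0 < f x].
have mB1 : measurable B1 by apply: measurableI.
have mB2 : measurable B2 by apply: measurableI.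
pose S1 := B1 `*` [set true].
pose S2 := B2 `*` [set false].
have mS1 : measurable S1 by apply: measurableX.
have mS2 : measurable S2 by apply: measurableX.
have ml : measurable_fun setT l by apply: nondecreasing_measurable.
have mlab : measurable_fun setT (fun z : X * bool => lab (R:=R) z.2).
  rewrite /lab; apply: measurable_fun_ifT => //; exact: measurable_snd.
have mh : measurable_fun setT (fun z : X * bool => (l (rho - lab z.2 * f z.1))%:E).
  apply: measurableT_comp => //; apply: measurableT_comp => //.
  apply: measurable_funB => //; apply: measurable_funM => //.
  exact: measurableT_comp.
pose G := fun z : X * bool => ((l rho)%:E * ((\1_S1 z)%:E + (\1_S2 z)%:E))%E.
have mi1 : measurable_fun setT (fun z : X * bool => ((\1_S1 z)%:E : \bar R)).
  by apply: measurableT_comp => //; apply: measurable_indic.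
have mi2 : measurable_fun setT (fun z : X * bool => ((\1_S2 z)%:E : \bar R)).
  by apply: measurableT_comp => //; apply: measurable_indic.
have -> : ((eps * fine (P (A `*` setT)) * l rho)%:E <= \int[P]_z (l (rho - lab z.2 * f z.1))%:E)%E.
  apply: (@le_trans _ _ (\int[P]_z G z)%E); last first.
    apply: ge0_le_integral => //.
    - move=> z _; rewrite /G; apply: mule_ge0; first by rewrite lee_fin.
      by apply: adde_ge0; rewrite lee_fin.

    - by apply: measurable_funeM; apply: emeasurable_funD.
    - move=> [x b] _; rewrite /G !indicE.
      case: b => /=.
      + rewrite (@memNset _ S2 (x, true)); last by move=> [_ /=].
        have [h1|h1] := pselect (S1 (x, true)).
          rewrite (mem_set h1) addr0 mule1 lee_fin; apply: Hmono.
          have [[_ h] _] := h1; rewrite /lab mul1r; move: h => /=; lra.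
        by rewrite (memNset h1) adde0 mule0 lee_fin.
      + rewrite (@memNset _ S1 (x, false)); last by move=> [_ /=].
        have [h1|h1] := pselect (S2 (x, false)).
          rewrite (mem_set h1) add0r mule1 lee_fin; apply: Hmono.
          have [[_ h] _] := h1; rewrite /lab mulN1r; move: h => /=; lra.
        by rewrite (memNset h1) adde0 mule0 lee_fin.
  rewrite /G ge0_integralZl //; try (by move=> z _; rewrite adde_ge0 // lee_fin); try by rewrite lee_fin.
  rewrite ge0_integralD //; try by move=> z _; rewrite lee_fin.
  rewrite !integral_indic // !setIT.
  2: by apply: emeasurable_funD.
  have h1 := @lower_true eps B1 mB1 (fun x '(conj h _) => (andP h).1) e0.
  have h2 := @upper_true eps B2 mB2 (fun x '(conj h _) => h) e0.
  have h3 := @splitT B2 mB2.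
  have h4 : fine (P (A `*` setT)) = fine (P (B1 `*` setT)) + fine (P (B2 `*` setT)).
    have -> : A `*` [set: bool] = B1 `*` [set: bool] `|` B2 `*` [set: bool] :> set (X * bool).
      apply/seteqP; split => [[x b] /= [Ax _]|[x b] /= [[[Ax _] _]|[[Ax _] _]]] //.
      by have [h|h] := lerP (f x) 0; [left|right].
    rewrite measureU; first by rewrite fineD // fin_num_measure //; apply: measurableX.
    - by apply: measurableX.
    - by apply: measurableX.
    - apply/seteqP; split => [[x b] /= [[[_ h] _] [[_ h'] _]]|//]; move: h h' => /=; lra.
  have h6 : ((eps * fine (P (A `*` setT)) * l rho)%:E <=
     (l rho)%:E * ((fine (P S1))%:E + (fine (P S2))%:E))%E.
    rewrite -EFinD -EFinM lee_fin.
    have : eps * fine (P (A `*` setT)) <= fine (P S1) + fine (P S2) by rewrite /S1 /S2; nra.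
    by move=> h5; rewrite mulrC; apply: ler_wpM2l.
  by rewrite -(PfinE _ mS1) -(PfinE _ mS2) in h6.
done.
Qed.

End K.

Theorem lemma2 (d : measure_display) (X : measurableType d) (R : realType)
  (P : probability (X * bool)%type R) (eta : X -> R)
  (Heta : cond_prob_pos P eta)
  (Hmargin : exists eps : R, 0 < eps /\
     (0 < P ([set x | (eps <= eta x <= 1 - eps)%R] `*` [set: bool]))%E)
  (l : R -> R)
  (Hmono : {homo l : x y / x <= y})
  (Hconv : convex_fun l)
  (Hnneg : forall z, 0 <= l z)
  (Hgrow : forall M : R, 0 < M -> exists z0 : R,
     forall z, z0 <= z -> forall g, subdiff l z g -> M <= g) :
  (-oo < opt_risk P l)%E.
Proof.
move: Hmargin => [eps [e0 HA]].
have mA : measurable [set x | (eps <= eta x <= 1 - eps)%R].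
  have -> : [set x | (eps <= eta x <= 1 - eps)%R] = eta @^-1` `[eps, 1 - eps]%classic.
    by apply/seteqP; split => x /=; rewrite in_itv.
  by rewrite -[X in measurable X]setTI; apply: Heta.1 => //; exact: measurable_itv.
have mAT : measurable ([set x | (eps <= eta x <= 1 - eps)%R] `*` [set: bool]).
  by apply: measurableX.
set c := fine (P ([set x | (eps <= eta x <= 1 - eps)%R] `*` [set: bool])).
have c0 : 0 < c.
  by move: HA; rewrite (@PfinE _ _ _ P _ mAT) lte_fin.
pose M := 2 / (eps * c).
have M0 : 0 < M by apply: divr_gt0 => //; apply: mulr_gt0.
have hM : eps * c * M = 2 by rewrite /M; field; apply/andP; split; rewrite gt_eqF.
have [z0 Hz0] := Hgrow M M0.
have [g hg] := @subgrad_ex _ l Hconv z0.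
have gM : M <= g by apply: (Hz0 z0).
have grow : forall rho, z0 <= rho -> M * (rho - z0) <= l rho.
  move=> rho hr; have := hg rho; have := Hnneg z0; nra.
apply: (lt_le_trans (ltNyr (- (2 * z0)))).
apply: le_ereal_inf_tmp => r [f [rho [mf ->]]].
have K := @key _ _ _ P eta Heta eps l f rho Hmono Hnneg mf (ltW e0) mA.
rewrite /risk; apply: le_trans (leeD2l _ K); rewrite -EFinD lee_fin.
have ec : 0 < eps * c by apply: mulr_gt0.
change (-(2*z0) <= -(2*rho) + eps*c*(l rho))%R.
have [hr|hr] := lerP z0 rho.
- have h1 := grow rho hr.
  have h2 : eps * c * (M * (rho - z0)) <= eps * c * l rho by rewrite ler_pM2l.
  have h3 : eps * c * (M * (rho - z0)) = 2 * (rho - z0) by rewrite mulrA hM.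
  lra.
- have := Hnneg rho; nra.
Qed.
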